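(* Let $c\in\mathbb{C}$ with $\operatorname{Re}(c)<-1$. Then $\overline{\sigma_c(\mathbb{N})}=\sigma_c(\mathbb{S})$, where the closure is taken in $\mathbb{C}$.
   Context: For $c\in\mathbb{C}$, $\sigma_c(n)=\sum_{d\mid n}d^c$ for $n\in\mathbb{N}$. A Steinitz (supernatural) number is a formal product $n=\prod_{p}p^{\alpha_p}$ over all primes with $\alpha_p\in\mathbb{Z}_{\ge0}\cup\{\infty\}$; $\mathbb{S}$ is the set of all Steinitz numbers. For $\operatorname{Re}(c)<-1$, $\sigma_c$ is extended to $\mathbb{S}$ multiplicatively: $\sigma_c(n)=\prod_p\sigma_c(p^{\alpha_p})$, with $\sigma_c(p^\alpha)=\sum_{i=0}^\alpha p^{ci}$ for finite $\alpha$ and $\sigma_c(p^\infty)=\lim_{k\to\infty}\sigma_c(p^k)=\frac{1}{1-p^c}$. *)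

(* Defs.v *)
From Stdlib Require Import Reals List Arith ZArith Znumtheory.
From Coquelicot Require Import Coquelicot.
Import ListNotations.
Open Scope R_scope.

Definition cpow (x : R) (c : C) : C :=
  let t := Im c * ln x in
  Cmult (RtoC (exp (Re c * ln x))) (cos t, sin t).

Definition Csum (l : list C) : C := fold_right Cplus (RtoC 0) l.
Definition Cprod (l : list C) : C := fold_right Cmult (RtoC 1) l.

Definition sigma_nat (c : C) (n : nat) : C :=
  Csum (map (fun d => cpow (INR d) c)
            (filter (fun d => Nat.eqb (n mod d) 0) (seq 1 n))).

(* Steinitz numbers: exponent function on primes, None = infinity.
   (Values at non-primes are irrelevant.) *)
Definition steinitz := nat -> option nat.

Definition sigma_pp (c : C) (p : nat) (a : option nat) : C :=
  match a with
  | Some k => Csum (map (fun i => cpow (INR p) (Cmult (RtoC (INR i)) c)) (seq 0 (S k)))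
  | None => Cinv (Cminus (RtoC 1) (cpow (INR p) c))
  end.

Definition isprime_nat (p : nat) : bool :=
  if prime_dec (Z.of_nat p) then true else false.

Definition sigma_partial (c : C) (alpha : steinitz) (N : nat) : C :=
  Cprod (map (fun p => sigma_pp c p (alpha p)) (filter isprime_nat (seq 0 (S N)))).

Definition sigma_steinitz_is (c : C) (alpha : steinitz) (z : C) : Prop :=
  filterlim (sigma_partial c alpha) eventually (locally z).

Definition sigma_S_set (c : C) (z : C) : Prop :=
  exists alpha : steinitz, sigma_steinitz_is c alpha z.

Definition sigma_N_set (c : C) (z : C) : Prop :=
  exists n : nat, (1 <= n)%nat /\ z = sigma_nat c n.

Definition in_closure (A : C -> Prop) (z : C) : Prop :=
  forall eps : R, 0 < eps -> exists w, A w /\ Cmod (Cminus w z) < eps.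

(* Main.v *)
Require Import Defs.
From Stdlib Require Import Reals List Arith ZArith Znumtheory Lia Lra Permutation ClassicalEpsilon Classical.
From Coquelicot Require Import Coquelicot.
Import ListNotations.
Open Scope R_scope.

Lemma exp_le' x y : x <= y -> exp x <= exp y.
Proof. intros [H|H]. left; apply exp_increasing; auto. subst; lra. Qed.

Lemma cpow_eq x c : cpow x c =
  (exp (Re c * ln x) * cos (Im c * ln x), exp (Re c * ln x) * sin (Im c * ln x)).
Proof. unfold cpow, Cmult, RtoC; simpl. f_equal; ring. Qed.

Lemma cpow_mult x y c : 0 < x -> 0 < y -> cpow (x*y) c = Cmult (cpow x c) (cpow y c).
Proof.
  intros Hx Hy. rewrite !cpow_eq, ln_mult by auto.
  unfold Cmult; simpl.
  rewrite !Rmult_plus_distr_l, exp_plus, cos_plus, sin_plus. f_equal; ring.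
Qed.

Lemma cpow_1 c : cpow 1 c = RtoC 1.
Proof. rewrite cpow_eq, ln_1, !Rmult_0_r, exp_0, cos_0, sin_0. unfold RtoC; f_equal; ring. Qed.

Lemma cpow_scal x i c : 0 < x -> cpow x (Cmult (RtoC (INR i)) c) = cpow (x ^ i) c.
Proof.
  intros Hx. rewrite !cpow_eq, ln_pow by auto. unfold Cmult, RtoC, Re, Im; simpl.
  f_equal; f_equal; f_equal; ring.
Qed.

Lemma Cmod_cpow x c : Cmod (cpow x c) = exp (Re c * ln x).
Proof.
  rewrite cpow_eq. unfold Cmod; simpl.
  set (E := exp (Re c * ln x)). set (t := Im c * ln x).
  replace (E * cos t * (E * cos t * 1) + E * sin t * (E * sin t * 1)) with (E ^ 2 * ((sin t)² + (cos t)²)) by (unfold Rsqr; ring).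
  rewrite sin2_cos2, Rmult_1_r. apply sqrt_pow2. left; apply exp_pos.
Qed.

Lemma div_Z (a b : nat) : Nat.divide a b <-> Z.divide (Z.of_nat a) (Z.of_nat b).
Proof.
  split.
  - intros [k ->]. exists (Z.of_nat k). now rewrite Nat2Z.inj_mul.
  - intros [k Hk]. destruct (Nat.eq_dec a 0) as [->|Ha].
    + simpl in Hk. rewrite Z.mul_0_r in Hk. assert (b = 0%nat) by lia. subst. exists 0%nat; lia.
    + assert (0 <= k)%Z by nia.
      exists (Z.to_nat k). apply Nat2Z.inj. rewrite Nat2Z.inj_mul, Z2Nat.id; lia.
Qed.

Definition nprime (p : nat) := prime (Z.of_nat p).

Lemma isprime_spec p : isprime_nat p = true <-> nprime p.
Proof. unfold isprime_nat, nprime. destruct (prime_dec (Z.of_nat p)); split; auto; discriminate. Qed.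

Lemma pr_ge2 p : nprime p -> (2 <= p)%nat.
Proof. intros H. apply prime_ge_2 in H. lia. Qed.

Lemma pr_euclid p a b : nprime p -> Nat.divide p (a*b) -> Nat.divide p a \/ Nat.divide p b.
Proof.
  intros Hp H. rewrite div_Z, Nat2Z.inj_mul in H. apply prime_mult in H; auto.
  rewrite !div_Z; auto.
Qed.

Lemma pr_gauss p d x : nprime p -> ~ Nat.divide p d -> Nat.divide d (p * x) -> Nat.divide d x.
Proof.
  intros Hp Hd H. rewrite div_Z in *. rewrite Nat2Z.inj_mul in H.
  apply Gauss with (Z.of_nat p); auto. apply rel_prime_sym. apply prime_rel_prime; auto.
Qed.

Lemma pr_pr p q : nprime p -> nprime q -> Nat.divide p q -> p = q.
Proof. intros Hp Hq H. rewrite div_Z in H. apply Nat2Z.inj. apply prime_div_prime; auto. Qed.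

Lemma pr_pow p q e : nprime p -> nprime q -> Nat.divide p (q ^ e) -> p = q.
Proof.
  intros Hp Hq. induction e; simpl; intros H.
  - apply Nat.divide_pos_le in H; [|lia]. apply pr_ge2 in Hp. lia.
  - apply pr_euclid in H; auto. destruct H; auto. apply pr_pr; auto.
Qed.

Lemma pr_exists n : (2 <= n)%nat -> exists p, nprime p /\ Nat.divide p n.
Proof.
  induction n as [n IH] using lt_wf_ind. intros Hn.
  destruct (prime_dec (Z.of_nat n)) as [Hp|Hp].
  - exists n. split; auto. apply Nat.divide_refl.
  - destruct (not_prime_divide (Z.of_nat n)) as [z [Hz1 Hz2]]; auto. lia.
    assert (Z.of_nat (Z.to_nat z) = z) by (apply Z2Nat.id; lia).
    destruct (IH (Z.to_nat z)) as [p [Hp1 Hp2]]; try lia.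
    exists p. split; auto. eapply Nat.divide_trans; eauto. apply div_Z. now rewrite H.
Qed.

Definition divs (n : nat) := filter (fun d => Nat.eqb (n mod d) 0) (seq 1 n).

Lemma divs_In n d : (1 <= n)%nat -> In d (divs n) <-> (1 <= d)%nat /\ Nat.divide d n.
Proof.
  intros Hn. unfold divs. rewrite filter_In, in_seq, Nat.eqb_eq. split.
  - intros [H1 H2]. split; [lia|]. apply Nat.Lcm0.mod_divide; auto.
  - intros [H1 H2]. split. apply Nat.divide_pos_le in H2; lia. apply Nat.Lcm0.mod_divide; auto.
Qed.

Lemma divs_NoDup n : NoDup (divs n).
Proof. apply NoDup_filter, seq_NoDup. Qed.


Lemma p_pos p (Hp : nprime p) : (0 < p)%nat. Proof. apply pr_ge2 in Hp; lia. Qed.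
Lemma pk_pos p (Hp : nprime p) k : (0 < p ^ k)%nat. Proof. apply Nat.neq_0_lt_0, Nat.pow_nonzero. pose proof (p_pos p Hp); lia. Qed.

Lemma decomp (p m : nat) (Hp : nprime p) (Hm : (1 <= m)%nat) (Hpm : ~ Nat.divide p m) k d : (1 <= d)%nat -> Nat.divide d (p^k * m) ->
  exists i e, (i <= k)%nat /\ (1 <= e)%nat /\ Nat.divide e m /\ d = (p^i * e)%nat.
Proof.
  revert d. induction k; intros d Hd H.
  - exists 0%nat, d. simpl in *. rewrite Nat.add_0_r in H. repeat split; auto; lia.
  - destruct (classic (Nat.divide p d)) as [[d' Hd']|Hnd].
    + subst d. assert (Hd'1 : (1 <= d')%nat) by nia.
      assert (Nat.divide d' (p^k*m)).
      { rewrite Nat.pow_succ_r', <- Nat.mul_assoc in H. rewrite Nat.mul_comm in H.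
        apply Nat.mul_divide_cancel_l in H; auto. pose proof (p_pos p Hp); lia. }
      destruct (IHk d') as [i [e [H1 [H2 [H3 H4]]]]]; auto.
      exists (S i), e. repeat split; auto; try lia. subst; rewrite Nat.pow_succ_r'; ring.
    + rewrite Nat.pow_succ_r', <- Nat.mul_assoc in H. apply pr_gauss in H; auto.
      destruct (IHk d) as [i [e [H1 [H2 [H3 H4]]]]]; auto.
      exists i, e. repeat split; auto.
Qed.

Lemma val_uniq p (Hp : nprime p) i j d e : ~ Nat.divide p d -> ~ Nat.divide p e -> (p^i * d = p^j * e)%nat -> i = j.
Proof.
  revert j. induction i; intros j Hd He H; destruct j; auto.
  - exfalso. apply Hd. simpl in H. exists (p^j * e)%nat. lia.
  - exfalso. apply He. simpl in H. exists (p^i * d)%nat. lia.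
  - f_equal. apply IHi; auto. simpl in H. pose proof (p_pos p Hp).
    apply Nat.mul_cancel_l with p; lia.
Qed.

Definition L p m k := flat_map (fun i => map (fun d => p^i * d)%nat (divs m)) (seq 0 (S k)).

Lemma L_In p m k x : In x (L p m k) <-> exists i d, (i <= k)%nat /\ In d (divs m) /\ x = (p^i * d)%nat.
Proof.
  unfold L. rewrite in_flat_map. split.
  - intros [i [H1 H2]]. rewrite in_map_iff in H2. destruct H2 as [d [H3 H4]].
    rewrite in_seq in H1. exists i, d. repeat split; auto; lia.
  - intros [i [d [H1 [H2 H3]]]]. exists i. rewrite in_seq, in_map_iff. split; [lia|]. eauto.
Qed.

Lemma NoDup_flat_map {A B} (g : A -> list B) l :
  NoDup l -> (forall x, In x l -> NoDup (g x)) ->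
  (forall x y a, In x l -> In y l -> In a (g x) -> In a (g y) -> x = y) ->
  NoDup (flat_map g l).
Proof.
  induction l as [|x l IH]; simpl; intros H1 H2 H3. constructor.
  inversion H1; subst. apply NoDup_app.
  - apply H2; auto.
  - apply IH; auto. intros x' y' a Hx Hy; apply H3; auto.
  - intros a Ha Ha'. rewrite in_flat_map in Ha'. destruct Ha' as [y [Hy Hay]].
    assert (x = y) by (apply (H3 x y a); auto). subst. tauto.
Qed.

Lemma notdiv_of_divs (p m : nat) (Hp : nprime p) (Hm : (1 <= m)%nat) (Hpm : ~ Nat.divide p m) d : In d (divs m) -> ~ Nat.divide p d.
Proof. intros H Hd. rewrite divs_In in H; auto. apply Hpm. eapply Nat.divide_trans; eauto. apply H. Qed.

Lemma L_NoDup (p m : nat) (Hp : nprime p) (Hm : (1 <= m)%nat) (Hpm : ~ Nat.divide p m) k : NoDup (L p m k).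
Proof.
  apply NoDup_flat_map; [apply seq_NoDup| |].
  - intros i _. apply FinFun.Injective_map_NoDup. 2: apply divs_NoDup.
    intros a b H. apply Nat.mul_cancel_l with (p^i)%nat; auto. pose proof (pk_pos p Hp i); lia.
  - intros i j a _ _ Hi Hj. rewrite in_map_iff in Hi, Hj.
    destruct Hi as [d [Hd1 Hd2]], Hj as [e [He1 He2]]. subst.
    apply (val_uniq p Hp) with d e; auto; eapply notdiv_of_divs; eauto.
Qed.

Lemma L_perm (p m : nat) (Hp : nprime p) (Hm : (1 <= m)%nat) (Hpm : ~ Nat.divide p m) k : Permutation (divs (p^k * m)) (L p m k).
Proof.
  assert (Hpk := pk_pos p Hp k).
  apply NoDup_Permutation. apply divs_NoDup. apply L_NoDup; auto.
  intros x. rewrite L_In, divs_In by nia. split.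
  - intros [H1 H2]. destruct (decomp p m Hp Hm Hpm k x) as [i [e [H3 [H4 [H5 H6]]]]]; auto.
    exists i, e. repeat split; auto. apply divs_In; auto.
  - intros [i [d [H1 [H2 H3]]]]. apply divs_In in H2; auto. destruct H2 as [H2 H4]. subst x.
    pose proof (pk_pos p Hp i). split. nia.
    replace k with (i + (k - i))%nat by lia. rewrite Nat.pow_add_r, <- Nat.mul_assoc.
    apply Nat.mul_divide_mono_l. apply Nat.divide_mul_r. auto.
Qed.

Lemma Csum_app l1 l2 : Csum (l1 ++ l2) = Cplus (Csum l1) (Csum l2).
Proof. induction l1; simpl. ring. rewrite IHl1. ring. Qed.

Lemma Cprod_app l1 l2 : Cprod (l1 ++ l2) = Cmult (Cprod l1) (Cprod l2).
Proof. induction l1; simpl. ring. rewrite IHl1. ring. Qed.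

Lemma Csum_perm l l' : Permutation l l' -> Csum l = Csum l'.
Proof. induction 1; simpl; auto. rewrite IHPermutation; auto. ring. congruence. Qed.

Lemma Csum_flat {A B} (f : B -> C) (g : A -> list B) l :
  Csum (map f (flat_map g l)) = Csum (map (fun x => Csum (map f (g x))) l).
Proof. induction l; simpl; auto. rewrite map_app, Csum_app, IHl. auto. Qed.

Lemma Csum_scal {A} (a : C) (g : A -> C) l :
  Csum (map (fun x => Cmult a (g x)) l) = Cmult a (Csum (map g l)).
Proof. induction l; simpl. ring. rewrite IHl. ring. Qed.

Lemma Csum_scal_r {A} (a : C) (g : A -> C) l :
  Csum (map (fun x => Cmult (g x) a) l) = Cmult (Csum (map g l)) a.
Proof. induction l; simpl. ring. rewrite IHl. ring. Qed.

Lemma INR_pos n : (1 <= n)%nat -> 0 < INR n.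
Proof. intros; apply lt_0_INR; lia. Qed.

Lemma key_sigma c p m k : nprime p -> (1 <= m)%nat -> ~ Nat.divide p m ->
  sigma_nat c (p^k * m)%nat = Cmult (sigma_pp c p (Some k)) (sigma_nat c m).
Proof.
  intros Hp Hm Hpm.
  assert (E: forall n, sigma_nat c n = Csum (map (fun d => cpow (INR d) c) (divs n))) by reflexivity.
  rewrite !E.
  rewrite (Csum_perm _ _ (Permutation_map _ (L_perm p m Hp Hm Hpm k))).
  unfold L. rewrite Csum_flat. unfold sigma_pp. rewrite <- Csum_scal_r.
  f_equal. apply map_ext. intros i.
  rewrite map_map, <- Csum_scal. f_equal. apply map_ext_in. intros d Hd.
  apply divs_In in Hd; auto. destruct Hd as [Hd _].
  pose proof (pr_ge2 _ Hp).
  assert (0 < INR p) by (apply lt_0_INR; lia).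
  assert (0 < INR d) by (apply lt_0_INR; lia).
  assert (0 < INR (p^i)) by (apply lt_0_INR; apply Nat.neq_0_lt_0, Nat.pow_nonzero; lia).
  rewrite mult_INR, cpow_mult, cpow_scal, pow_INR; auto.
Qed.

Definition primesL (N : nat) := filter isprime_nat (seq 0 (S N)).
Definition npow (N : nat) (b : nat -> nat) : nat :=
  fold_right Nat.mul 1%nat (map (fun p => p ^ b p)%nat (primesL N)).

Lemma isprime_0 : isprime_nat 0 = false.
Proof. unfold isprime_nat. destruct (prime_dec (Z.of_nat 0)); auto. exfalso; apply not_prime_0; auto. Qed.
Lemma isprime_1 : isprime_nat 1 = false.
Proof. unfold isprime_nat. destruct (prime_dec (Z.of_nat 1)); auto. exfalso; apply not_prime_1; auto. Qed.

Lemma primesL_S N : primesL (S N) = primesL N ++ (if isprime_nat (S N) then [S N] else []).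
Proof. unfold primesL. rewrite (seq_S (S N)), filter_app. simpl. destruct (isprime_nat (S N)); auto. Qed.

Lemma primesL_0 : primesL 0 = [].
Proof. unfold primesL. cbn [seq filter]. rewrite isprime_0. auto. Qed.

Lemma primesL_In N p : In p (primesL N) <-> (p <= N)%nat /\ nprime p.
Proof. unfold primesL. rewrite filter_In, in_seq, isprime_spec. split; intros [? ?]; split; auto; lia. Qed.

Lemma nprod_app l1 l2 : fold_right Nat.mul 1%nat (l1 ++ l2) = (fold_right Nat.mul 1%nat l1 * fold_right Nat.mul 1%nat l2)%nat.
Proof. induction l1; simpl; lia. Qed.

Lemma npow_S N b : npow (S N) b = (npow N b * (if isprime_nat (S N) then S N ^ b (S N) else 1))%nat.
Proof. unfold npow. rewrite primesL_S, map_app, nprod_app. destruct (isprime_nat (S N)); simpl; lia. Qed.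

Lemma sp_S c a N : sigma_partial c a (S N) =
  Cmult (sigma_partial c a N) (if isprime_nat (S N) then sigma_pp c (S N) (a (S N)) else RtoC 1).
Proof.
  unfold sigma_partial. fold (primesL (S N)). fold (primesL N).
  rewrite primesL_S, map_app, Cprod_app. destruct (isprime_nat (S N)); simpl; ring.
Qed.

Lemma npow_0 b : npow 0 b = 1%nat.
Proof. unfold npow. rewrite primesL_0. auto. Qed.

Lemma sp_0 c a : sigma_partial c a 0 = RtoC 1.
Proof. unfold sigma_partial. fold (primesL 0). rewrite primesL_0. auto. Qed.

Lemma npow_pos N b : (1 <= npow N b)%nat.
Proof.
  induction N. rewrite npow_0; lia.
  rewrite npow_S. destruct (isprime_nat (S N)) eqn:E. 2: lia.
  assert (0 < S N ^ b (S N))%nat by (apply Nat.neq_0_lt_0, Nat.pow_nonzero; lia). nia.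
Qed.

Lemma npow_notdiv q N b : nprime q -> (N < q)%nat -> ~ Nat.divide q (npow N b).
Proof.
  intros Hq. induction N; intros HN Hd.
  - rewrite npow_0 in Hd. apply Nat.divide_pos_le in Hd; [|lia]. apply pr_ge2 in Hq; lia.
  - rewrite npow_S in Hd. apply pr_euclid in Hd; auto. destruct Hd as [Hd|Hd].
    + apply IHN; auto; lia.
    + destruct (isprime_nat (S N)) eqn:E.
      * apply isprime_spec in E. apply pr_pow in Hd; auto. lia.
      * apply Nat.divide_pos_le in Hd; [|lia]. apply pr_ge2 in Hq; lia.
Qed.

Lemma sigma_nat_1 c : sigma_nat c 1 = RtoC 1.
Proof. unfold sigma_nat. simpl. replace (R1) with 1 by auto. rewrite cpow_1. unfold Csum; simpl. ring. Qed.

Theorem NT1 c N b : sigma_nat c (npow N b) = sigma_partial c (fun p => Some (b p)) N.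
Proof.
  induction N.
  - rewrite npow_0, sp_0. apply sigma_nat_1.
  - rewrite npow_S, sp_S. destruct (isprime_nat (S N)) eqn:E.
    + apply isprime_spec in E. rewrite Nat.mul_comm, key_sigma; auto.
      rewrite IHN. ring. apply npow_pos. apply npow_notdiv; auto.
    + rewrite Nat.mul_1_r, IHN. ring.
Qed.

Lemma npow_ext N b b' : (forall p, (p <= N)%nat -> b p = b' p) -> npow N b = npow N b'.
Proof.
  intros H. unfold npow. f_equal. apply map_ext_in. intros p Hp.
  apply primesL_In in Hp. rewrite H; auto. lia.
Qed.

Lemma npow_ext_zero M d b : (forall p, (M < p)%nat -> b p = 0%nat) -> npow (M + d) b = npow M b.
Proof.
  intros H. induction d. rewrite Nat.add_0_r; auto.
  rewrite Nat.add_succ_r, npow_S, IHd, H by lia. destruct (isprime_nat _); simpl; lia.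
Qed.

Definition upd {A} (b : nat -> A) q v := fun p => if Nat.eqb p q then v else b p.

Lemma npow_upd q N b : nprime q -> (q <= N)%nat -> npow N (upd b q (S (b q))) = (q * npow N b)%nat.
Proof.
  intros Hq. induction N; intros HN.
  - apply pr_ge2 in Hq; lia.
  - rewrite !npow_S. destruct (Nat.eq_dec q (S N)) as [->|Hne].
    + rewrite (npow_ext N (upd b (S N) (S (b (S N)))) b).
      * apply isprime_spec in Hq. rewrite Hq. unfold upd. rewrite Nat.eqb_refl. simpl. lia.
      * intros p Hp. unfold upd. destruct (Nat.eqb_spec p (S N)); auto; lia.
    + rewrite IHN by lia. unfold upd. destruct (Nat.eqb_spec (S N) q); [lia|]. destruct (isprime_nat (S N)); ring.
Qed.

Theorem NT2 n : (1 <= n)%nat -> exists b, (forall p, (n < p)%nat -> b p = 0%nat) /\ npow n b = n.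
Proof.
  induction n as [n IH] using lt_wf_ind. intros Hn.
  destruct (Nat.eq_dec n 1) as [->|Hn1].
  - exists (fun _ => 0%nat). split. auto. transitivity (npow 0 (fun _ => 0%nat)). apply (npow_ext_zero 0 1); auto. apply npow_0.
  - destruct (pr_exists n) as [q [Hq [k Hk]]]; [lia|].
    assert (Hq2 := pr_ge2 _ Hq). assert (Hqn : (q <= n)%nat) by (apply Nat.divide_pos_le; [lia|exists k; auto]). assert (Hk1 : (1 <= k)%nat) by nia.
    destruct (IH k) as [b [Hb1 Hb2]]; try nia.
    exists (upd b q (S (b q))). split.
    + intros p Hp. unfold upd. destruct (Nat.eqb_spec p q). nia. apply Hb1. nia.
    + rewrite npow_upd; auto; try nia.
      replace n with (k + (n - k))%nat at 1 by nia. rewrite npow_ext_zero; auto. nia.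
Qed.

Definition pw (r x : R) := exp (r * ln x).

Fixpoint cpw (w : C) (n : nat) : C := match n with O => RtoC 1 | S n => Cmult w (cpw w n) end.

Lemma Cmod_cpw w n : Cmod (cpw w n) = Cmod w ^ n.
Proof. induction n; simpl. apply Cmod_1. rewrite Cmod_mult, IHn; auto. Qed.

Lemma cpow_pow x c i : 0 < x -> cpow (x ^ i) c = cpw (cpow x c) i.
Proof. intros Hx. induction i; simpl. apply cpow_1. rewrite cpow_mult, IHi; auto. apply pow_lt; auto. Qed.

Lemma geom w n : Cmult (Cminus (RtoC 1) w) (Csum (map (cpw w) (seq 0 n))) = Cminus (RtoC 1) (cpw w n).
Proof.
  induction n. simpl; ring.
  rewrite seq_S, map_app, Csum_app. simpl.
  transitivity (Cplus (Cmult (Cminus (RtoC 1) w) (Csum (map (cpw w) (seq 0 n)))) (Cmult (Cminus (RtoC 1) w) (cpw w n))).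
  ring. rewrite IHn. ring.
Qed.

Lemma sp_some c p k : nprime p ->
  sigma_pp c p (Some k) = Csum (map (cpw (cpow (INR p) c)) (seq 0 (S k))).
Proof.
  intros Hp. unfold sigma_pp. f_equal. apply map_ext. intro i.
  assert (0 < INR p) by (apply lt_0_INR; apply pr_ge2 in Hp; lia).
  rewrite cpow_scal, cpow_pow; auto.
Qed.

Lemma pw_le_half r x : r < -1 -> 2 <= x -> pw r x <= / 2.
Proof.
  intros Hr Hx. unfold pw.
  assert (H2 : ln 2 <= ln x) by (apply ln_le; lra).
  assert (H0 : / 2 < ln 2) by apply ln_lt_2.
  replace (/ 2) with (exp (- ln 2)).
  apply exp_le'. nra.
  rewrite exp_Ropp, exp_ln; lra.
Qed.

Lemma pw_pos r x : 0 < pw r x.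
Proof. apply exp_pos. Qed.

Lemma Cmod_w c p : Cmod (cpow (INR p) c) = pw (Re c) (INR p).
Proof. rewrite Cmod_cpow. reflexivity. Qed.

Lemma w_small c p : Re c < -1 -> nprime p -> Cmod (cpow (INR p) c) <= / 2.
Proof.
  intros hc Hp. rewrite Cmod_w. apply pw_le_half; auto.
  apply pr_ge2 in Hp. apply le_INR in Hp. simpl in Hp. lra.
Qed.

Lemma one_minus_w w : Cmod w <= / 2 ->
  Cminus (RtoC 1) w <> RtoC 0 /\ Cmod (Cinv (Cminus (RtoC 1) w)) <= 2.
Proof.
  intros Hw.
  assert (H : 1 <= Cmod (Cminus (RtoC 1) w) + Cmod w).
  { assert (E: Cplus (Cminus (RtoC 1) w) w = RtoC 1) by ring.
    pose proof (Cmod_triangle (Cminus (RtoC 1) w) w) as T. rewrite E, Cmod_1 in T. exact T. }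
  assert (Hne : Cminus (RtoC 1) w <> RtoC 0).
  { intros E. rewrite E, Cmod_0 in H. lra. }
  split; auto. rewrite Cmod_inv; auto.
  replace 2 with (/ (/ 2)) by field. apply Rinv_le_contravar; lra.
Qed.

Lemma Cmod_sym x y : Cmod (Cminus x y) = Cmod (Cminus y x).
Proof. rewrite <- Cmod_opp. f_equal. ring. Qed.

Lemma sp_diff c p k : Re c < -1 -> nprime p ->
  Cmod (Cminus (sigma_pp c p (Some k)) (sigma_pp c p None)) <= 2 * Cmod (cpow (INR p) c) ^ (S k).
Proof.
  intros hc Hp. set (w := cpow (INR p) c).
  assert (Hw := w_small c p hc Hp). fold w in Hw.
  destruct (one_minus_w w Hw) as [Hne Hinv].
  rewrite sp_some; auto. simpl sigma_pp. fold w.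
  assert (E : Csum (map (cpw w) (seq 0 (S k))) = Cmult (Cinv (Cminus (RtoC 1) w)) (Cminus (RtoC 1) (cpw w (S k)))).
  { rewrite <- geom. field. auto. }
  rewrite E.
  replace (Cminus (Cmult (Cinv (Cminus (RtoC 1) w)) (Cminus (RtoC 1) (cpw w (S k)))) (Cinv (Cminus (RtoC 1) w)))
    with (Copp (Cmult (Cinv (Cminus (RtoC 1) w)) (cpw w (S k)))) by ring.
  rewrite Cmod_opp, Cmod_mult, Cmod_cpw.
  apply Rmult_le_compat_r; auto. apply pow_le, Cmod_ge_0.
Qed.

Lemma half_pow k : 2 * (/ 2) ^ (S k) = (/ 2) ^ k.
Proof. simpl. field. Qed.

Lemma sp_diff2 c p k : Re c < -1 -> nprime p ->
  Cmod (Cminus (sigma_pp c p (Some k)) (sigma_pp c p None)) <= (/ 2) ^ k.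
Proof.
  intros hc Hp. eapply Rle_trans. apply sp_diff; auto. rewrite <- half_pow.
  apply Rmult_le_compat_l. lra. apply pow_incr. split. apply Cmod_ge_0. apply w_small; auto.
Qed.

Lemma sp_none1 c p : Re c < -1 -> nprime p ->
  Cmod (Cminus (sigma_pp c p None) (RtoC 1)) <= 2 * Cmod (cpow (INR p) c).
Proof.
  intros hc Hp. set (w := cpow (INR p) c).
  assert (Hw := w_small c p hc Hp). fold w in Hw.
  destruct (one_minus_w w Hw) as [Hne Hinv].
  simpl sigma_pp. fold w.
  replace (Cminus (Cinv (Cminus (RtoC 1) w)) (RtoC 1)) with (Cmult (Cinv (Cminus (RtoC 1) w)) w) by (field; auto).
  rewrite Cmod_mult. apply Rmult_le_compat_r; auto. apply Cmod_ge_0.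
Qed.

Lemma pow_le1 x n : 0 <= x <= 1 -> x ^ n <= 1.
Proof. intros H. induction n; simpl. lra. assert (0 <= x ^ n) by (apply pow_le; lra). nra. Qed.

Lemma sp_near1 c p a : Re c < -1 -> nprime p ->
  Cmod (Cminus (sigma_pp c p a) (RtoC 1)) <= 4 * Cmod (cpow (INR p) c).
Proof.
  intros hc Hp. assert (Hw := w_small c p hc Hp). assert (H0 := Cmod_ge_0 (cpow (INR p) c)).
  assert (H1 := sp_none1 c p hc Hp).
  destruct a as [k|]. 2: lra.
  replace (Cminus (sigma_pp c p (Some k)) (RtoC 1)) with
    (Cplus (Cminus (sigma_pp c p (Some k)) (sigma_pp c p None)) (Cminus (sigma_pp c p None) (RtoC 1))) by ring.
  eapply Rle_trans. apply Cmod_triangle.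
  assert (H2 := sp_diff c p k hc Hp).
  assert (Cmod (cpow (INR p) c) ^ S k <= Cmod (cpow (INR p) c)).
  { simpl. assert (Cmod (cpow (INR p) c) ^ k <= 1) by (apply pow_le1; lra).
    replace (Cmod (cpow (INR p) c) * 1) with (Cmod (cpow (INR p) c)) by ring. nra. }
  lra.
Qed.

Lemma sp_bound c p a : Re c < -1 -> nprime p -> Cmod (sigma_pp c p a) <= 3.
Proof.
  intros hc Hp. assert (H1 := sp_near1 c p a hc Hp). assert (Hw := w_small c p hc Hp).
  replace (sigma_pp c p a) with (Cplus (Cminus (sigma_pp c p a) (RtoC 1)) (RtoC 1)) by ring.
  eapply Rle_trans. apply Cmod_triangle. rewrite Cmod_1. lra.
Qed.

Lemma sp_some0 c p : (1 <= p)%nat -> sigma_pp c p (Some 0%nat) = RtoC 1.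
Proof.
  intros Hp. unfold sigma_pp. cbn [seq map]. unfold Csum; cbn [fold_right].
  rewrite cpow_scal. simpl pow. rewrite cpow_1. ring. apply lt_0_INR; lia.
Qed.

Definition Rsum (l : list R) := fold_right Rplus 0 l.

Lemma key_ineq r m : r < -1 -> 2 <= m ->
  - (r + 1) * pw r m <= exp ((r + 1) * ln (m - 1)) - exp ((r + 1) * ln m).
Proof.
  intros Hr Hm. set (s := r + 1).
  assert (Hs : s < 0) by (unfold s; lra).
  assert (E1 : pw r m = exp (s * ln m) / m).
  { unfold pw. replace (r * ln m) with (s * ln m + - ln m) by (unfold s; ring).
    rewrite exp_plus, exp_Ropp, exp_ln by lra. field. lra. }
  assert (E2 : ln (m - 1) <= ln m - / m).
  { assert (m - 1 <= m * exp (- / m)).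
    { assert (1 + - / m <= exp (- / m)) by apply exp_ineq1_le.
      assert (m * (1 + - / m) = m - 1) by (field; lra). nra. }
    replace (ln m - / m) with (ln (m * exp (- / m))).
    apply ln_le; lra. rewrite ln_mult, ln_exp. ring. lra. apply exp_pos. }
  assert (E3 : exp (s * ln m) * (1 - s / m) <= exp (s * ln (m - 1))).
  { eapply Rle_trans with (exp (s * ln m) * exp (- s / m)).
    apply Rmult_le_compat_l. left; apply exp_pos.
    replace (1 - s / m) with (1 + (- s / m)) by (unfold Rdiv; ring). apply exp_ineq1_le.
    rewrite <- exp_plus. apply exp_le'. unfold Rdiv. nra. }
  rewrite E1. assert (0 < exp (s * ln m)) by apply exp_pos.
  unfold Rdiv in *. nra.
Qed.

Lemma tele r a n : r < -1 -> (1 <= a)%nat ->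
  - (r + 1) * Rsum (map (fun m => pw r (INR m)) (seq (S a) n)) <=
  exp ((r + 1) * ln (INR a)) - exp ((r + 1) * ln (INR (a + n))).
Proof.
  intros Hr. revert a. induction n; intros a Ha.
  - simpl. rewrite Nat.add_0_r. lra.
  - cbn [seq map]. unfold Rsum in *; cbn [fold_right].
    assert (H := IHn (S a) ltac:(lia)).
    assert (K := key_ineq r (INR (S a)) Hr).
    rewrite S_INR in K. replace (INR a + 1 - 1) with (INR a) in K by ring.
    rewrite <- S_INR in K. replace (a + S n)%nat with (S a + n)%nat by lia.
    unfold Rsum in *. 
    assert (2 <= INR (S a)) by (rewrite S_INR; apply le_INR in Ha; simpl in Ha; lra).
    specialize (K H0). lra.
Qed.

Lemma tele2 r a n : r < -1 -> (1 <= a)%nat ->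
  Rsum (map (fun m => pw r (INR m)) (seq (S a) n)) <= exp ((r + 1) * ln (INR a)) / (- (r + 1)).
Proof.
  intros Hr Ha. assert (H := tele r a n Hr Ha).
  assert (0 < exp ((r + 1) * ln (INR (a + n)))) by apply exp_pos.
  apply Rmult_le_reg_l with (- (r + 1)). lra.
  field_simplify. 2: lra. lra.
Qed.

Lemma Rsum_filter_le (f : nat -> R) l P : (forall x, 0 <= f x) ->
  Rsum (map f (filter P l)) <= Rsum (map f l).
Proof.
  intros H. induction l; simpl. lra. destruct (P a); simpl; specialize (H a); unfold Rsum in *; simpl; lra.
Qed.

Lemma Rsum_scal (f : nat -> R) l a : Rsum (map (fun x => a * f x) l) = a * Rsum (map f l).
Proof. induction l; unfold Rsum in *; simpl. ring. rewrite IHl. ring. Qed.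

Lemma prod_near1 (l : list nat) (g : nat -> C) (d : nat -> R) :
  (forall x, In x l -> Cmod (Cminus (g x) (RtoC 1)) <= d x) ->
  Cmod (Cminus (Cprod (map g l)) (RtoC 1)) <= exp (Rsum (map d l)) - 1.
Proof.
  induction l as [|x l IH]; intros H.
  - simpl. unfold Rsum; simpl. rewrite exp_0.
    replace (Cminus (RtoC 1) (RtoC 1)) with (RtoC 0) by ring. rewrite Cmod_0. lra.
  - simpl. unfold Rsum in *; simpl.
    assert (IH' := IH (fun y Hy => H y (or_intror Hy))).
    assert (Hx := H x (or_introl eq_refl)).
    set (Q := Cprod (map g l)) in *. set (S' := fold_right Rplus 0 (map d l)) in *.
    replace (Cminus (Cmult (g x) Q) (RtoC 1)) with
      (Cplus (Cmult (Cminus (g x) (RtoC 1)) Q) (Cminus Q (RtoC 1))) by ring.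
    eapply Rle_trans. apply Cmod_triangle. rewrite Cmod_mult.
    assert (HQ : Cmod Q <= exp S').
    { replace Q with (Cplus (Cminus Q (RtoC 1)) (RtoC 1)) by ring.
      eapply Rle_trans. apply Cmod_triangle. rewrite Cmod_1. lra. }
    assert (0 <= d x) by (eapply Rle_trans; [apply Cmod_ge_0|apply Hx]).
    assert (1 + d x <= exp (d x)) by apply exp_ineq1_le.
    rewrite exp_plus.
    assert (0 <= Cmod (Cminus (g x) (RtoC 1))) by apply Cmod_ge_0.
    assert (0 <= Cmod Q) by apply Cmod_ge_0.
    assert (0 < exp S') by apply exp_pos.
    nra.
Qed.

Lemma prod_bound (l : list nat) (a : nat -> C) :
  (forall x, In x l -> Cmod (a x) <= 3) -> Cmod (Cprod (map a l)) <= 3 ^ length l.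
Proof.
  induction l as [|x l IH]; intros H; simpl. rewrite Cmod_1; lra.
  rewrite Cmod_mult. apply Rmult_le_compat. apply Cmod_ge_0. apply Cmod_ge_0.
  apply H; simpl; auto. apply IH; intros; apply H; simpl; auto.
Qed.

Lemma prod_diff (l : list nat) (a b : nat -> C) eta : 0 <= eta ->
  (forall x, In x l -> Cmod (a x) <= 3 /\ Cmod (b x) <= 3 /\ Cmod (Cminus (a x) (b x)) <= eta) ->
  Cmod (Cminus (Cprod (map a l)) (Cprod (map b l))) <= INR (length l) * 3 ^ length l * eta.
Proof.
  intros He. induction l as [|x l IH]; intros H.
  - simpl. replace (Cminus (RtoC 1) (RtoC 1)) with (RtoC 0) by ring. rewrite Cmod_0. lra.
  - change (Cprod (map a (x :: l))) with (Cmult (a x) (Cprod (map a l))).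
    change (Cprod (map b (x :: l))) with (Cmult (b x) (Cprod (map b l))).
    change (length (x :: l)) with (S (length l)).
    assert (IH' := IH (fun y Hy => H y (or_intror Hy))).
    destruct (H x (or_introl eq_refl)) as [H1 [H2 H3]].
    assert (HA := prod_bound l a (fun y Hy => proj1 (H y (or_intror Hy)))).
    set (A := Cprod (map a l)) in *. set (B := Cprod (map b l)) in *.
    replace (Cminus (Cmult (a x) A) (Cmult (b x) B)) with
      (Cplus (Cmult (Cminus (a x) (b x)) A) (Cmult (b x) (Cminus A B))) by ring.
    eapply Rle_trans. apply Cmod_triangle. rewrite !Cmod_mult.
    assert (0 <= Cmod A) by apply Cmod_ge_0. assert (0 <= Cmod (Cminus A B)) by apply Cmod_ge_0.
    assert (0 <= Cmod (b x)) by apply Cmod_ge_0. assert (0 <= Cmod (Cminus (a x) (b x))) by apply Cmod_ge_0.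
    assert (0 < 3 ^ length l) by (apply pow_lt; lra).
    assert (0 <= INR (length l)) by apply pos_INR.
    rewrite S_INR. simpl pow.
    assert (Cmod (Cminus (a x) (b x)) * Cmod A <= eta * 3 ^ length l) by (apply Rmult_le_compat; auto).
    assert (Cmod (b x) * Cmod (Cminus A B) <= 3 * (INR (length l) * 3 ^ length l * eta)) by (apply Rmult_le_compat; auto).
    nra.
Qed.

Definition Tail c (a : steinitz) j N :=
  Cprod (map (fun p => sigma_pp c p (a p)) (filter isprime_nat (seq (S j) (N - j)))).

Lemma split_tail c a j N : (j <= N)%nat -> sigma_partial c a N = Cmult (sigma_partial c a j) (Tail c a j N).
Proof.
  intros H. unfold sigma_partial, Tail.
  replace (S N) with (S j + (N - j))%nat at 1 by lia. rewrite seq_app, filter_app, map_app, Cprod_app. reflexivity.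
Qed.

Lemma tail_bound c a j N : Re c < -1 -> (1 <= j)%nat ->
  Cmod (Cminus (Tail c a j N) (RtoC 1)) <= exp (4 * (exp ((Re c + 1) * ln (INR j)) / (- (Re c + 1)))) - 1.
Proof.
  intros hc Hj. unfold Tail.
  eapply Rle_trans. apply prod_near1 with (d := fun p => 4 * pw (Re c) (INR p)).
  - intros x Hx. apply filter_In in Hx. destruct Hx as [_ Hx]. apply isprime_spec in Hx.
    rewrite <- Cmod_w. apply sp_near1; auto.
  - apply Rplus_le_compat_r. apply exp_le'.
    eapply Rle_trans. apply Rsum_filter_le. intros; assert (0 < pw (Re c) (INR x)) by apply pw_pos; lra.
    rewrite Rsum_scal. apply Rmult_le_compat_l. lra. apply tele2; auto.
Qed.

Lemma sp_1 c a : sigma_partial c a 1 = RtoC 1.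
Proof.
  unfold sigma_partial. cbn [seq filter]. rewrite isprime_0, isprime_1. reflexivity.
Qed.

Lemma P_bound c a j : Re c < -1 -> Cmod (sigma_partial c a j) <= exp (4 / (- (Re c + 1))).
Proof.
  intros hc.
  assert (1 <= exp (4 / (- (Re c + 1)))).
  { assert (1 + 4 / (- (Re c + 1)) <= exp (4 / (- (Re c + 1)))) by apply exp_ineq1_le.
    assert (0 < 4 / (- (Re c + 1))) by (apply Rdiv_lt_0_compat; lra). lra. }
  destruct j. rewrite sp_0, Cmod_1. auto.
  rewrite (split_tail c a 1 (S j)) by lia. rewrite sp_1.
  replace (Cmult (RtoC 1) (Tail c a 1 (S j))) with (Cplus (Cminus (Tail c a 1 (S j)) (RtoC 1)) (RtoC 1)) by ring.
  eapply Rle_trans. apply Cmod_triangle. rewrite Cmod_1.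
  assert (T := tail_bound c a 1 (S j) hc (le_n _)).
  simpl INR in T. rewrite ln_1, Rmult_0_r, exp_0 in T.
  replace (4 * (1 / - (Re c + 1))) with (4 / - (Re c + 1)) in T by (field; lra). lra.
Qed.

Lemma Cprod_ones (l : list nat) (g : nat -> C) : (forall x, In x l -> g x = RtoC 1) -> Cprod (map g l) = RtoC 1.
Proof. induction l; intros H; simpl; auto. rewrite H, IHl; auto. ring. intros; apply H; simpl; auto. left; auto. Qed.

Lemma supp_stable c (b : nat -> nat) M L : (forall p, (M < p)%nat -> b p = 0%nat) -> (M <= L)%nat ->
  sigma_partial c (fun p => Some (b p)) L = sigma_partial c (fun p => Some (b p)) M.
Proof.
  intros Hb HL. rewrite (split_tail c _ M L HL). unfold Tail. rewrite Cprod_ones. ring.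
  intros x Hx. apply filter_In in Hx. destruct Hx as [Hx _]. apply in_seq in Hx.
  rewrite Hb by lia. apply sp_some0. lia.
Qed.

Lemma expm1_bound y : 0 <= y <= 1 -> exp y - 1 <= 3 * y.
Proof.
  intros Hy. assert (1 + - y <= exp (- y)) by apply exp_ineq1_le.
  assert (exp y * exp (- y) = 1) by (rewrite <- exp_plus; replace (y + - y) with 0 by ring; apply exp_0).
  assert (exp y <= 3) by (eapply Rle_trans; [apply exp_le'; apply Hy| apply exp_le_3]).
  assert (0 < exp y) by apply exp_pos. nra.
Qed.

Lemma nat_above X : exists j, (1 <= j)%nat /\ X <= INR j.
Proof.
  destruct (archimed X) as [H1 _].
  exists (S (Z.to_nat (up X))). split. lia.
  rewrite S_INR. destruct (Z_lt_le_dec (up X) 0).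
  - assert (0 <= INR (Z.to_nat (up X))) by apply pos_INR. assert (IZR (up X) < 0) by (apply IZR_lt; auto). lra.
  - rewrite INR_IZR_INZ, Z2Nat.id by auto. lra.
Qed.

Lemma small_tail r t : r < -1 -> 0 < t -> exists j, (1 <= j)%nat /\
  exp (4 * (exp ((r + 1) * ln (INR j)) / (- (r + 1)))) - 1 <= t.
Proof.
  intros Hr Ht. set (s := r + 1). assert (Hs : s < 0) by (unfold s; lra).
  set (y := Rmin 1 (t / 3)).
  assert (Hy : 0 < y) by (unfold y; apply Rmin_pos; lra).
  assert (Hy1 : y <= 1) by apply Rmin_l. assert (Hy2 : y <= t / 3) by apply Rmin_r.
  set (x0 := y * (- s) / 4). assert (Hx0 : 0 < x0) by (unfold x0; apply Rdiv_lt_0_compat; nra).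
  destruct (nat_above (exp (ln x0 / s))) as [j [Hj1 Hj2]].
  exists j. split; auto.
  assert (0 < INR j) by (apply lt_0_INR; lia).
  assert (ln x0 / s <= ln (INR j)).
  { rewrite <- (ln_exp (ln x0 / s)). apply ln_le; auto. apply exp_pos. }
  assert (s * ln (INR j) <= ln x0).
  { apply Rmult_le_compat_neg_l with (r := s) in H0. 2: lra.
    replace (s * (ln x0 / s)) with (ln x0) in H0 by (field; lra). lra. }
  assert (exp (s * ln (INR j)) <= x0) by (rewrite <- (exp_ln x0) by auto; apply exp_le'; auto).
  assert (4 * (exp (s * ln (INR j)) / - s) <= y).
  { apply Rle_trans with (4 * (x0 / - s)).
    apply Rmult_le_compat_l. lra. unfold Rdiv. apply Rmult_le_compat_r. left; apply Rinv_0_lt_compat; lra. auto.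
    unfold x0. right. field. lra. }
  assert (0 < exp (s * ln (INR j))) by apply exp_pos.
  assert (0 <= 4 * (exp (s * ln (INR j)) / - s)) by (apply Rmult_le_pos; [lra|]; unfold Rdiv; apply Rmult_le_pos; [lra|]; left; apply Rinv_0_lt_compat; lra).
  eapply Rle_trans. apply Rplus_le_compat_r. apply exp_le'. apply H3.
  assert (exp y - 1 <= 3 * y) by (apply expm1_bound; lra). lra.
Qed.

Lemma small_K M eps : 0 <= M -> 0 < eps -> exists K, M * (/ 2) ^ K < eps.
Proof.
  intros HM He. destruct (pow_lt_1_zero (/ 2)) with (y := eps / (M + 1)) as [K HK].
  rewrite Rabs_pos_eq; lra. apply Rdiv_lt_0_compat; lra.
  exists K. specialize (HK K (le_n _)). rewrite Rabs_pos_eq in HK by (apply pow_le; lra).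
  assert (0 <= (/2) ^ K) by (apply pow_le; lra).
  apply Rmult_lt_compat_l with (r := M + 1) in HK. 2: lra.
  replace ((M + 1) * (eps / (M + 1))) with eps in HK by (field; lra). nra.
Qed.

Lemma lim_to_eps (u : nat -> C) z : filterlim u eventually (locally z) ->
  forall eps, 0 < eps -> exists N, forall n, (N <= n)%nat -> Cmod (Cminus (u n) z) < eps.
Proof.
  intros H eps He. rewrite filterlim_locally in H.
  assert (Hf := @norm_factor_gt_0 C_AbsRing C_NormedModule).
  set (nf := @norm_factor C_AbsRing C_NormedModule) in *.
  assert (Hp : 0 < eps / nf) by (apply Rdiv_lt_0_compat; auto).
  destruct (H (mkposreal _ Hp)) as [N HN]. exists N. intros n Hn.
  specialize (HN n Hn). apply (@norm_compat2 C_AbsRing C_NormedModule) in HN. simpl in HN.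
  fold nf in HN. replace (nf * (eps / nf)) with eps in HN by (field; lra). exact HN.
Qed.

Lemma eps_to_lim (u : nat -> C) z :
  (forall eps, 0 < eps -> exists N, forall n, (N <= n)%nat -> Cmod (Cminus (u n) z) < eps) ->
  filterlim u eventually (locally z).
Proof.
  intros H. rewrite filterlim_locally. intros eps. destruct (H eps (cond_pos eps)) as [N HN].
  exists N. intros n Hn. apply (@norm_compat1 C_AbsRing C_NormedModule). apply HN; auto.
Qed.

Lemma sp_eq c a N : sigma_partial c a N = Cprod (map (fun p => sigma_pp c p (a p)) (primesL N)).
Proof. reflexivity. Qed.

Lemma dirA c z (a : steinitz) : Re c < -1 -> sigma_steinitz_is c a z -> in_closure (sigma_N_set c) z.
Proof.
  intros hc H eps He.
  destruct (lim_to_eps _ _ H (eps / 2)) as [N HN]. lra.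
  specialize (HN N (le_n _)).
  set (n0 := length (primesL N)).
  destruct (small_K (INR n0 * 3 ^ n0) (eps / 2)) as [K HK].
  { apply Rmult_le_pos. apply pos_INR. apply pow_le; lra. } lra.
  set (b := fun p => if Nat.leb p N then match a p with Some e => e | None => K end else 0%nat).
  exists (sigma_nat c (npow N b)). split.
  - exists (npow N b). split; auto. apply npow_pos.
  - rewrite NT1.
    assert (D : Cmod (Cminus (sigma_partial c (fun p => Some (b p)) N) (sigma_partial c a N)) <= INR n0 * 3 ^ n0 * (/ 2) ^ K).
    { rewrite !sp_eq. apply prod_diff. apply pow_le; lra.
      intros p Hp. apply primesL_In in Hp. destruct Hp as [Hp1 Hp2].
      split. apply sp_bound; auto. split. apply sp_bound; auto.
      unfold b. apply Nat.leb_le in Hp1. rewrite Hp1.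
      destruct (a p) as [e|].
      - replace (Cminus (sigma_pp c p (Some e)) (sigma_pp c p (Some e))) with (RtoC 0) by ring.
        rewrite Cmod_0. apply pow_le; lra.
      - apply sp_diff2; auto. }
    replace (Cminus (sigma_partial c (fun p => Some (b p)) N) z) with
      (Cplus (Cminus (sigma_partial c (fun p => Some (b p)) N) (sigma_partial c a N)) (Cminus (sigma_partial c a N) z)) by ring.
    eapply Rle_lt_trans. apply Cmod_triangle. lra.
Qed.

Definition matchb (a : steinitz) (b : nat -> nat) j K :=
  forall p, (p <= j)%nat -> nprime p -> (forall e, a p = Some e -> b p = e) /\ (a p = None -> (K <= b p)%nat).

Definition Tprop c z (a : steinitz) j :=
  forall K eps, 0 < eps -> exists b M, (forall p, (M < p)%nat -> b p = 0%nat) /\ matchb a b j K /\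
    Cmod (Cminus (sigma_partial c (fun p => Some (b p)) M) z) < eps.

Lemma matchb_mono a b j K K' : (K <= K')%nat -> matchb a b j K' -> matchb a b j K.
Proof. intros HK H p Hp Hpp. destruct (H p Hp Hpp) as [H1 H2]. split; auto. intros; specialize (H2 H0); lia. Qed.

Lemma T_0 c z a : in_closure (sigma_N_set c) z -> Tprop c z a 0.
Proof.
  intros H K eps He. destruct (H eps He) as [w [[n [Hn ->]] Hw]].
  destruct (NT2 n Hn) as [b [Hb1 Hb2]].
  exists b, n. split; auto. split.
  - intros p Hp Hpp. apply pr_ge2 in Hpp. lia.
  - rewrite <- NT1, Hb2. auto.
Qed.

Lemma T_ext c z a a' j : (forall p, (p <= j)%nat -> a p = a' p) -> Tprop c z a j -> Tprop c z a' j.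
Proof.
  intros E H K eps He. destruct (H K eps He) as [b [M [H1 [H2 H3]]]].
  exists b, M. split; auto. split; auto. intros p Hp Hpp. rewrite <- E by auto. apply H2; auto.
Qed.

Lemma T_step c z a j : Tprop c z a j -> exists v, Tprop c z (upd a (S j) v) (S j).
Proof.
  intros HT.
  destruct (classic (nprime (S j))) as [Hq|Hq].
  2: { exists None. intros K eps Heps. destruct (HT K eps Heps) as [b [M [H1 [H2 H3]]]].
       exists b, M. split; auto. split; auto. intros p Hp Hpp.
       unfold upd. destruct (Nat.eqb_spec p (S j)). subst; contradiction. apply H2; auto; lia. }
  destruct (classic (exists e, forall K eps, 0 < eps -> exists b M, (forall p, (M < p)%nat -> b p = 0%nat) /\
     matchb a b j K /\ b (S j) = e /\ Cmod (Cminus (sigma_partial c (fun p => Some (b p)) M) z) < eps)) as [[e He]|Hne].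
  - exists (Some e). intros K eps Heps. destruct (He K eps Heps) as [b [M [H1 [H2 [H3 H4]]]]].
    exists b, M. split; auto. split; auto. intros p Hp Hpp. unfold upd. destruct (Nat.eqb_spec p (S j)).
    + subst. split. intros e' He'. inversion He'; subst; auto. discriminate.
    + apply H2; auto; lia.
  - exists None.
    assert (Hbad : forall e, exists Ke epse, 0 < epse /\ forall b M, (forall p, (M < p)%nat -> b p = 0%nat) ->
        matchb a b j Ke -> b (S j) = e -> ~ Cmod (Cminus (sigma_partial c (fun p => Some (b p)) M) z) < epse).
    { intros e. apply not_ex_all_not with (n := e) in Hne.
      apply not_all_ex_not in Hne. destruct Hne as [Ke Hne]. apply not_all_ex_not in Hne. destruct Hne as [epse Hne].
      exists Ke, epse. apply imply_to_and in Hne. destruct Hne as [Hpos Hne]. split; auto.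
      intros b M H1 H2 H3 H4. apply Hne. exists b, M. auto. }
    assert (Hcomb : forall K, exists K' eps', 0 < eps' /\ forall e, (e < K)%nat -> forall b M, (forall p, (M < p)%nat -> b p = 0%nat) ->
        matchb a b j K' -> b (S j) = e -> ~ Cmod (Cminus (sigma_partial c (fun p => Some (b p)) M) z) < eps').
    { induction K.
      - exists 0%nat, 1. split. lra. intros e He. lia.
      - destruct IHK as [K1 [eps1 [Hp1 H1]]]. destruct (Hbad K) as [Ke [epse [Hpe He]]].
        exists (Nat.max K1 Ke), (Rmin eps1 epse). split. apply Rmin_pos; auto.
        intros e' He' b M Hs Hm Hb Hc.
        assert (Rmin eps1 epse <= eps1) by apply Rmin_l. assert (Rmin eps1 epse <= epse) by apply Rmin_r.
        destruct (Nat.eq_dec e' K).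
        + subst. apply (He b M); auto. eapply matchb_mono; [|apply Hm]; lia. lra.
        + apply (H1 e' ltac:(lia) b M); auto. eapply matchb_mono; [|apply Hm]; lia. lra. }
    intros K eps Heps. destruct (Hcomb K) as [K' [eps' [Hp' H']]].
    destruct (HT (Nat.max K K') (Rmin eps eps')) as [b [M [H1 [H2 H3]]]]. apply Rmin_pos; auto.
    assert (Rmin eps eps' <= eps) by apply Rmin_l. assert (Rmin eps eps' <= eps') by apply Rmin_r.
    assert (HK : (K <= b (S j))%nat).
    { destruct (Nat.le_gt_cases K (b (S j))) as [|Hlt]; auto. exfalso.
      apply (H' (b (S j)) Hlt b M H1); auto. eapply matchb_mono; [|apply H2]; lia. lra. }
    exists b, M. split; auto. split. 2: lra.
    intros p Hp Hpp. unfold upd. destruct (Nat.eqb_spec p (S j)).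
    + subst. split. intros e' He'. discriminate. auto.
    + assert (Hm := matchb_mono a b j K (Nat.max K K') ltac:(lia) H2). apply Hm; auto; lia.
Qed.

Definition gstep c z (a : steinitz) j : option nat :=
  epsilon (inhabits None) (fun v => Tprop c z (upd a (S j) v) (S j)).

Fixpoint seqA c z (j : nat) : steinitz :=
  match j with
  | O => fun _ => None
  | S j' => upd (seqA c z j') (S j') (gstep c z (seqA c z j') j')
  end.

Lemma seqA_T c z : in_closure (sigma_N_set c) z -> forall j, Tprop c z (seqA c z j) j.
Proof.
  intros H. induction j. apply T_0; auto.
  simpl. unfold gstep. apply (epsilon_spec (inhabits None) (fun v => Tprop c z (upd (seqA c z j) (S j) v) (S j))).
  apply T_step; auto.
Qed.

Lemma seqA_stable c z p d : seqA c z (p + d) p = seqA c z p p.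
Proof.
  induction d. rewrite Nat.add_0_r; auto.
  rewrite Nat.add_succ_r. simpl. unfold upd. destruct (Nat.eqb_spec p (S (p + d))). lia. auto.
Qed.

Lemma dirB_T c z : in_closure (sigma_N_set c) z -> forall j, Tprop c z (fun p => seqA c z p p) j.
Proof.
  intros H j. apply T_ext with (seqA c z j). 2: apply seqA_T; auto.
  intros p Hp. replace j with (p + (j - p))%nat by lia. apply seqA_stable.
Qed.

Lemma half_pow_mono K m : (K <= m)%nat -> (/ 2) ^ m <= (/ 2) ^ K.
Proof.
  intros H. replace m with (K + (m - K))%nat by lia. rewrite pow_add.
  assert (0 <= (/2) ^ K) by (apply pow_le; lra).
  assert ((/2) ^ (m - K) <= 1) by (apply pow_le1; lra). nra.
Qed.

Lemma final c z (a : steinitz) : Re c < -1 -> (forall j, Tprop c z a j) -> sigma_steinitz_is c a z.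
Proof.
  intros hc H. apply eps_to_lim. intros eps He.
  set (Bc := exp (4 / (- (Re c + 1)))).
  assert (HBc : 1 <= Bc).
  { assert (1 + 4 / (- (Re c + 1)) <= Bc) by apply exp_ineq1_le.
    assert (0 < 4 / (- (Re c + 1))) by (apply Rdiv_lt_0_compat; lra). lra. }
  assert (Ht : 0 < Rmin 1 (eps / (6 * Bc))) by (apply Rmin_pos; [lra|apply Rdiv_lt_0_compat; lra]).
  destruct (small_tail (Re c) _ hc Ht) as [j [Hj Hdel]].
  set (del := exp (4 * (exp ((Re c + 1) * ln (INR j)) / - (Re c + 1))) - 1) in *.
  assert (Hd1 : del <= 1) by (eapply Rle_trans; [apply Hdel|apply Rmin_l]).
  assert (Hd2 : del <= eps / (6 * Bc)) by (eapply Rle_trans; [apply Hdel|apply Rmin_r]).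
  set (n0 := length (primesL j)).
  destruct (small_K (INR n0 * 3 ^ n0) (eps / 6)) as [K HK].
  { apply Rmult_le_pos. apply pos_INR. apply pow_le; lra. } lra.
  destruct (H j K (eps / 3)) as [b [M [H1 [H2 H3]]]]. lra.
  exists j. intros N HN.
  set (L := Nat.max M N).
  rewrite <- (supp_stable c b M L H1) in H3 by lia.
  rewrite (split_tail c a j N HN) in *.
  rewrite (split_tail c _ j L) in H3 by lia.
  set (A := sigma_partial c a j) in *. set (B := sigma_partial c (fun p => Some (b p)) j) in *.
  set (T1 := Tail c a j N) in *. set (T2 := Tail c (fun p => Some (b p)) j L) in *.
  assert (HAB : Cmod (Cminus A B) <= INR n0 * 3 ^ n0 * (/ 2) ^ K).
  { unfold A, B. rewrite !sp_eq. apply prod_diff. apply pow_le; lra.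
    intros p Hp. apply primesL_In in Hp. destruct Hp as [Hp1 Hp2].
    split. apply sp_bound; auto. split. apply sp_bound; auto.
    destruct (H2 p Hp1 Hp2) as [E1 E2].
    destruct (a p) as [e|] eqn:Ea.
    - rewrite (E1 e eq_refl).
      replace (Cminus (sigma_pp c p (Some e)) (sigma_pp c p (Some e))) with (RtoC 0) by ring.
      rewrite Cmod_0. apply pow_le; lra.
    - rewrite Cmod_sym. eapply Rle_trans. apply sp_diff2; auto. apply half_pow_mono. auto. }
  assert (HT1 : Cmod (Cminus T1 (RtoC 1)) <= del) by (apply tail_bound; auto).
  assert (HT2 : Cmod (Cminus T2 (RtoC 1)) <= del) by (apply tail_bound; auto).
  assert (HB : Cmod B <= Bc) by (apply P_bound; auto).
  assert (HT1b : Cmod T1 <= 2).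
  { replace T1 with (Cplus (Cminus T1 (RtoC 1)) (RtoC 1)) by ring.
    eapply Rle_trans. apply Cmod_triangle. rewrite Cmod_1. lra. }
  assert (HT12 : Cmod (Cminus T1 T2) <= 2 * del).
  { replace (Cminus T1 T2) with (Cplus (Cminus T1 (RtoC 1)) (Copp (Cminus T2 (RtoC 1)))) by ring.
    eapply Rle_trans. apply Cmod_triangle. rewrite Cmod_opp. lra. }
  replace (Cminus (Cmult A T1) z) with
    (Cplus (Cplus (Cmult (Cminus A B) T1) (Cmult B (Cminus T1 T2))) (Cminus (Cmult B T2) z)) by ring.
  eapply Rle_lt_trans. apply Cmod_triangle.
  eapply Rle_lt_trans. apply Rplus_le_compat_r. apply Cmod_triangle.
  rewrite !Cmod_mult.
  assert (Cmod (Cminus A B) * Cmod T1 <= (eps / 6) * 2).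
  { apply Rmult_le_compat; try apply Cmod_ge_0; lra. }
  assert (Cmod B * Cmod (Cminus T1 T2) <= Bc * (2 * del)).
  { apply Rmult_le_compat; try apply Cmod_ge_0; lra. }
  assert (Bc * (2 * del) <= eps / 3).
  { apply Rmult_le_compat_l with (r := 2 * Bc) in Hd2. 2: lra.
    replace (2 * Bc * (eps / (6 * Bc))) with (eps / 3) in Hd2 by (field; lra). lra. }
  lra.
Qed.

Theorem mainTheorem4 (c : C) (hc : Re c < -1) :
  forall z : C, in_closure (sigma_N_set c) z <-> sigma_S_set c z.
Proof.
  intros z. split.
  - intros H. exists (fun p => seqA c z p p). apply final; auto. apply dirB_T; auto.
  - intros [a Ha]. apply dirA with a; auto.
Qed.
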